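(* Let $R$ be a $*$-ring. Then $R$ is strongly $J$-$*$-clean if and only if (1) $R$ is strongly $*$-clean, and (2) $J(R)=\{x\in R \mid 1-x\in U(R)\}$.
   Context: All rings are associative with identity. A $*$-ring is a ring $R$ with an involution $*$, i.e. a map $a\mapsto a^*$ with $(a+b)^*=a^*+b^*$, $(ab)^*=b^*a^*$, $(a^* )^*=a$. $U(R)$ denotes the group of units and $J(R)$ the Jacobson radical of $R$. A projection is an element $e$ with $e^2=e=e^*$. $R$ is strongly $J$-$*$-clean if every $a\in R$ can be written $a=e+u$ with $e$ a projection, $u\in J(R)$ and $ae=ea$. $R$ is strongly $*$-clean if every $a\in R$ can be written $a=e+u$ with $e$ a projection, $u\in U(R)$ and $eu=ue$. *)

(* Defs.v *)
From mathcomp Require Import all_boot all_algebra.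
Set Implicit Arguments. Unset Strict Implicit. Unset Printing Implicit Defensive.
Import GRing.Theory.
Local Open Scope ring_scope.

Section StarRing.
Variable R : pzRingType.

Definition is_involution (s : R -> R) : Prop :=
  (forall a b, s (a + b) = s a + s b) /\
  (forall a b, s (a * b) = s b * s a) /\
  (forall a, s (s a) = a).

Definition is_unit (u : R) : Prop := exists v : R, u * v = 1 /\ v * u = 1.

Definition left_ideal (I : R -> Prop) : Prop :=
  I 0 /\ (forall x y, I x -> I y -> I (x - y)) /\ (forall r x, I x -> I (r * x)).

Definition proper_pred (I : R -> Prop) : Prop := exists x, ~ I x.

Definition maximal_left_ideal (I : R -> Prop) : Prop :=
  left_ideal I /\ proper_pred I /\
  (forall K : R -> Prop, left_ideal K -> proper_pred K ->
     (forall x, I x -> K x) -> forall x, K x -> I x).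

Definition jacobson (x : R) : Prop :=
  forall I : R -> Prop, maximal_left_ideal I -> I x.

Definition is_projection (s : R -> R) (e : R) : Prop := e * e = e /\ s e = e.

Definition strongly_J_star_clean (s : R -> R) : Prop :=
  forall a : R, exists e u : R,
    is_projection s e /\ jacobson u /\ a = e + u /\ a * e = e * a.

Definition strongly_star_clean (s : R -> R) : Prop :=
  forall a : R, exists e u : R,
    is_projection s e /\ is_unit u /\ a = e + u /\ e * u = u * e.

End StarRing.

(* Main.v *)
Require Import Defs.
From mathcomp Require Import all_boot all_algebra.
From mathcomp Require boolp classical_sets.
From Stdlib Require Import Classical.
Local Open Scope ring_scope.
Import GRing.Theory.

Lemma grp (V : zmodType) (f v o : V) : f + v = o - f + (f + f + (v - o)).
Proof.
rewrite [f + f + _]addrC -!addrA [v + _]addrCA [- f + _]addrCA.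
rewrite [o + _]addrA subrr add0r addrCA addKr addrC //.
Qed.

Section Aux.
Variable R : pzRingType.

Lemma li_one (I : R -> Prop) : left_ideal I -> I 1 -> forall x, I x.
Proof. by move=> [_ [_ hm]] h1 x; rewrite -[x]mulr1; apply: hm. Qed.

Lemma exists_max (L : R -> Prop) : left_ideal L -> ~ L 1 ->
  exists M, maximal_left_ideal M /\ (forall x, L x -> M x).
Proof.
move=> hL nL1.
pose P := fun I : R -> Prop => left_ideal (fun x => I x \/ L x) /\ ~ (I 1 \/ L 1).
have [A [PA maxA]] : exists A : R -> Prop, P A /\ (forall B : R -> Prop, classical_sets.proper A B -> ~ P B).
  apply: classical_sets.Zorn_bigcup => F FP Ftot.
  pose U := classical_sets.bigcup F (fun X => X).
  have inU : forall z, (U z \/ L z) -> L z \/ exists X, F X /\ X z.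
    move=> z [[X FX Xz]|Lz]; [right; exists X; split=> // | by left].
  have common : forall z1 z2, (U z1 \/ L z1) -> (U z2 \/ L z2) ->
     (L z1 /\ L z2) \/ exists X, F X /\ (X z1 \/ L z1) /\ (X z2 \/ L z2).
    move=> z1 z2 /inU [L1|[X1 [F1 X1z]]] /inU [L2|[X2 [F2 X2z]]].
    - by left.
    - by right; exists X2; split=> //; split; [right|left].
    - by right; exists X1; split=> //; split; [left|right].
    - have [S12|S21] := Ftot _ _ F1 F2.
      + by right; exists X2; split=> //; split; left=> //; apply: S12.
      + by right; exists X1; split=> //; split; left=> //; apply: S21.
  have back : forall X z, F X -> (X z \/ L z) -> U z \/ L z.
    by move=> X z FX [Xz|Lz]; [left; exists X|right].
  split; last first.
    move=> [[X FX X1]|//].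
    by have [_ /(_ (or_introl X1))] := FP X FX.
  split; first by right; case: hL.
  split.
    move=> x y hx hy; have [[Lx Ly]|[X [FX [hx' hy']]]] := common _ _ hx hy.
      by right; case: hL => _ [hs _]; apply: hs.
    apply: (back X) => //; have [[_ [hs _]] _] := FP X FX; exact: hs.
  move=> r x /inU [Lx|[X [FX Xx]]].
    by right; case: hL => _ [_ hm]; apply: hm.
  apply: (back X) => //; have [[_ [_ hm]] _] := FP X FX; apply: hm; by left.
have [liM nM1] := PA.
exists (fun x => A x \/ L x); split; last by move=> x Lx; right.
split=> //; split; first by exists 1.
move=> K liK [y nKy] sub x Kx.
apply: NNPP => nMx.
have nK1 : ~ K 1 by move=> K1; apply: nKy; apply: li_one.
apply: (maxA K).
  split; first by move=> z Az; apply: sub; left.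
  by move=> KA; apply: nMx; left; apply: KA.
have KL : forall z, (K z \/ L z) -> K z by move=> z [//|Lz]; apply: sub; right.
split; last by move=> /KL.
case: liK => [K0 [Ks Km]].
split; first by left.
split; first by move=> a b /KL Ka /KL Kb; left; apply: Ks.
by move=> r a /KL Ka; left; apply: Km.
Qed.

Lemma jac_mul (r x : R) : jacobson x -> jacobson (r * x).
Proof. by move=> hx I hI; have [[_ [_ hm]] _] := hI; apply: hm; apply: hx. Qed.

Lemma jac_sub (x y : R) : jacobson x -> jacobson y -> jacobson (x - y).
Proof.
move=> hx hy I hI; have [[_ [hs _]] _] := hI; apply: hs; [exact: hx|exact: hy].
Qed.

Lemma jac_linv (y : R) : jacobson y -> exists v, v * (1 - y) = 1.
Proof.
move=> hy; apply: NNPP => nex.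
pose L := fun z : R => exists r, z = r * (1 - y).
have liL : left_ideal L.
  split; first by exists 0; rewrite mul0r.
  split; first by move=> a b [r1 ->] [r2 ->]; exists (r1 - r2); rewrite mulrBl.
  by move=> r a [r1 ->]; exists (r * r1); rewrite mulrA.
have nL1 : ~ L 1 by move=> [r h]; apply: nex; exists r.
have [M [maxM LM]] := @exists_max L liL nL1.
have My := hy M maxM.
have M1y : M (1 - y) by apply: LM; exists 1; rewrite mul1r.
have [[M0 [Ms Mm]] [[z nMz] _]] := maxM.
apply: nMz; apply: li_one; first by case: maxM.
have := Ms _ _ M1y (Ms _ _ M0 My).
by rewrite sub0r opprK subrK.
Qed.

Lemma jac_unit (y : R) : jacobson y -> is_unit (1 - y).
Proof.
move=> hy; have [v hv] := @jac_linv _ hy.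
have [w hw] := @jac_linv _ (jac_mul (- v) _ hy).
have ev : 1 - (- v) * y = v.
  by rewrite mulNr opprK -{1}hv mulrBr mulr1 subrK.
rewrite ev in hw.
have wE : w = 1 - y by rewrite -[w]mulr1 -{1}hv mulrA hw mul1r.
by exists v; split=> //; rewrite -wE.
Qed.

End Aux.
Arguments jac_mul {R} r x.
Arguments jac_unit {R y}.
Arguments jac_sub {R} x y.

Theorem theorem3p4 (R : pzRingType) (s : R -> R) (hs : is_involution s) :
  strongly_J_star_clean s <->
  (strongly_star_clean s /\
   (forall x : R, jacobson x <-> is_unit (1 - x))).
Proof.
case: hs => [sD [sM sK]].
have s0 : s 0 = 0.
  have := sD 0 0; rewrite addr0 => /(congr1 (fun t => t - s 0)).
  by rewrite subrr addrK.
have sN : forall x, s (- x) = - s x.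
  move=> x; have := sD x (- x); rewrite subrr s0 => /eqP.
  by rewrite eq_sym addr_eq0 => /eqP ->; rewrite opprK.
have s1 : s 1 = 1 by have := sM 1 (s 1); rewrite mul1r sK mul1r.
have projC : forall e, is_projection s e -> is_projection s (1 - e).
  move=> e [ee se]; split.
    by rewrite mulrBl !mulrBr !mulr1 !mul1r ee subrr subr0.
  by rewrite sD sN s1 se.
split.
- move=> H; split.
  + move=> a; have [e [u [pe [Ju [aE ae]]]]] := H a.
    have [ee se] := pe.
    have [f fE] : exists f, f = 1 - e by exists (1 - e).
    have ef : e * f = 0 by rewrite fE mulrBr mulr1 ee subrr.
    have fe : f * e = 0 by rewrite fE mulrBl mul1r ee subrr.
    have ff : f * f = f by rewrite fE; have [] := projC e pe.
    have [t tE] : exists t, t = e - f by exists (e - f).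
    have tt : t * t = 1.
      by rewrite tE mulrBl !mulrBr ee ef fe ff subr0 sub0r opprK fE addrC subrK.
    have [w [w1 w2]] := jac_unit (jac_mul (-t) u Ju).
    have vE : a - f = t * (1 - (- t) * u).
      by rewrite mulrBr mulr1 mulNr mulrN opprK mulrA tt mul1r aE tE addrAC.
    have fa : f * a = a * f by rewrite fE mulrBl mulrBr mul1r mulr1 ae.
    exists f, (a - f); split; first by rewrite fE; exact: projC.
    split.
      exists (w * t); rewrite vE; split.
        by rewrite -mulrA (mulrA _ w) w1 mul1r tt.
      by rewrite -mulrA (mulrA t) tt mul1r w2.
    split; first by rewrite addrC subrK.
    by rewrite mulrBr mulrBl ff fa.
  + move=> x; split; first exact: jac_unit.
    move=> [w [w1 w2]]; have [e [u [[ee se] [Ju [xE xe]]]]] := H x.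
    have c : (1 - x) * e = - (e * u).
      by rewrite mulrBl mul1r xe xE mulrDr ee opprD addrA subrr sub0r.
    have Je : jacobson e.
      have -> : e = (- (w * e)) * u.
        by rewrite mulNr -mulrA -mulrN -c mulrA w2 mul1r.
      exact: jac_mul.
    have [v [v1 v2]] := jac_unit Je.
    have e0 : e = 0 by rewrite -[e]mulr1 -v1 mulrA mulrBr mulr1 ee subrr mul0r.
    by rewrite xE e0 add0r.
- move=> [SC HJ] a.
  have [f [v [pf [[v' [vv1 vv2]] [aE fv]]]]] := SC a.
  have [ff sf] := pf.
  have Jj : jacobson (1 - v).
    by apply/HJ; rewrite opprB addrC subrK; exists v'.
  have J2 : jacobson (1 + 1 : R).
    by apply/HJ; exists (-1); rewrite opprD addrA subrr sub0r mulrNN mul1r.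
  exists (1 - f), (f * (1 + 1) - (1 - v)).
  split; first exact: projC.
  split; first exact: jac_sub _ _ (jac_mul f _ J2) Jj.
  split.
    by rewrite aE mulrDr mulr1 opprB; exact: grp.
  by rewrite mulrBr mulrBl mulr1 mul1r aE mulrDl mulrDr ff fv.
Qed.
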